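(* Let $G$ be a connected graph with a fixed vertex $w$. Take a cycle $C_c$ of length $c\in\{5,6\}$, vertex-disjoint from $G$, and identify one vertex of the cycle with $w$. Let $v_2$ be a vertex of $C_c$ at distance $2$ from $w$ on the cycle, and let $v_1$ be the unique common neighbour of $w$ and $v_2$ on $C_c$. Attach a path of length $2$ (with two new vertices) by identifying one of its endpoints with $v_2$, and denote the resulting graph by $G^*$. Then $\delta_{G^*}(w) = t_{G^*}(w) - t_{G^*-v_1}(w) \leq -2$.
   Context: All graphs are finite, simple, undirected. For a graph $H$ and vertex $x$, the transmission is $t_H(x)=\sum_{y\in V(H)}\mathrm{dist}_H(x,y)$; $H-v$ denotes $H$ with vertex $v$ and its incident edges deleted. The quantity $\delta_{G^*}(w)$ is taken with respect to the vertex $v_1$. *)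

(* Defs.v *)
From HB Require Import structures.
From mathcomp Require Import all_boot all_order all_algebra.
Set Implicit Arguments. Unset Strict Implicit. Unset Printing Implicit Defensive.
Import Order.TTheory GRing.Theory Num.Theory.

(* walkn e n x y : there is a walk of length at most n from x to y. *)
Fixpoint walkn (V : finType) (e : rel V) (n : nat) (x y : V) : bool :=
  match n with
  | 0 => x == y
  | n'.+1 => walkn e n' x y || [exists z, walkn e n' x z && e z y]
  end.

(* A shortest
   path has length < #|V|, so for connected pairs this is the true distance;
   for unreachable pairs it returns #|V| (never used below: all graphs are
   connected). *)
Definition dist (V : finType) (e : rel V) (x y : V) : nat :=
  find (fun n => walkn e n x y) (iota 0 #|V|).

Definition transmission (V : finType) (e : rel V) (x : V) : nat :=
  \sum_(y : V) dist e x y.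

Definition vdel (V : finType) (e : rel V) (v : V) : rel {x : V | x != v} :=
  fun a b => e (val a) (val b).

Arguments vdel {V} e v.

(* Vertex set of G^* :
   inl (inl a)  : vertex a of G (w = inl (inl w) is the identified vertex),
   inl (inr tt) : v1, the cycle neighbour of w,
   inr (inl i)  : remaining cycle vertices u_0, ..., u_{c-3}, with u_0 = v2,
                  cycle  w - v1 - u_0 - u_1 - ... - u_{c-3} - w,
   inr (inr j)  : the two new path vertices p_0, p_1, path v2 - p_0 - p_1. *)
Definition gstarV (T : finType) (c : nat) : finType :=
  ((T + unit) + ('I_(c.-2) + 'I_2))%type.

Definition gstar (T : finType) (e : rel T) (w : T) (c : nat) : rel (gstarV T c) :=
  fun x y =>
  match x, y with
  | inl (inl a), inl (inl b) => e a b
  | inl (inl a), inl (inr _) | inl (inr _), inl (inl a) => a == w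
  | inl (inl a), inr (inl i) | inr (inl i), inl (inl a) =>
      (a == w) && (val i == c - 3)
  | inl (inr _), inr (inl i) | inr (inl i), inl (inr _) => val i == 0
  | inr (inl i), inr (inl j) => (val i == (val j).+1) || (val j == (val i).+1)
  | inr (inl i), inr (inr p) | inr (inr p), inr (inl i) =>
      (val i == 0) && (val p == 0)
  | inr (inr p), inr (inr q) => (val p == (val q).+1) || (val q == (val p).+1)
  | _, _ => false
  end.

Arguments gstar {T} e w c.

Definition gs_w (T : finType) (c : nat) (w : T) : gstarV T c := inl (inl w).
Definition gs_v1 (T : finType) (c : nat) : gstarV T c := inl (inr tt).

Arguments gs_w {T} c w.
Arguments gs_v1 T c.

Lemma gs_w_neq_v1 (T : finType) (c : nat) (w : T) : @gs_w T c w != @gs_v1 T c.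
Proof. by []. Qed.

Definition gs_w_del (T : finType) (c : nat) (w : T) : {x : gstarV T c | x != @gs_v1 T c} :=
  exist _ (@gs_w T c w) (@gs_w_neq_v1 T c w).

Definition delta_gstar (T : finType) (e : rel T) (w : T) (c : nat) : int :=
  (transmission (gstar e w c) (@gs_w T c w))%:Z
  - (transmission (vdel (gstar e w c) (@gs_v1 T c)) (@gs_w_del T c w))%:Z.

(* Main.v *)
Require Import Defs.
From HB Require Import structures.
From mathcomp Require Import all_boot all_order all_algebra zify.
Import Order.TTheory GRing.Theory Num.Theory.
Set Implicit Arguments. Unset Strict Implicit.
Section W.
Variable V : finType.
Variable e : rel V.

Lemma walk_snoc n x z y : walkn e n x z -> e z y -> walkn e n.+1 x y.
Proof. by move=> H He /=; apply/orP; right; apply/existsP; exists z; rewrite H He. Qed.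

Lemma walk_mono n m x y : n <= m -> walkn e n x y -> walkn e m x y.
Proof.
move=> /subnKC <-; elim: (m - n) => [|k IH]; first by rewrite addn0.
by move=> H; rewrite addnS /= IH.
Qed.

Lemma dist_le n x y : walkn e n x y -> n < #|V| -> dist e x y <= n.
Proof.
move=> Hw Hn; rewrite /dist leqNgt; apply/negP => Hlt.
have := before_find 0 Hlt; rewrite nth_iota // add0n Hw //.
Qed.

Lemma dist_walk x y : dist e x y < #|V| -> walkn e (dist e x y) x y.
Proof.
rewrite /dist => H.
have Hh : has (fun n => walkn e n x y) (iota 0 #|V|) by rewrite has_find size_iota.
by have := nth_find 0 Hh; rewrite nth_iota ?add0n.
Qed.

Lemma dist_ge k x y : (forall n, walkn e n x y -> k <= n) -> k <= #|V| -> k <= dist e x y.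
Proof.
move=> H Hk; case: (ltnP (dist e x y) #|V|) => Hd.
  exact/H/dist_walk.
exact: leq_trans Hk Hd.
Qed.

Lemma walk_pot (f : V -> nat) : (forall x y, e x y -> f y <= (f x).+1) ->
  forall n x y, walkn e n x y -> f y <= f x + n.
Proof.
move=> Hf; elim => [|n IH] x y /=; first by move/eqP->; rewrite addn0.
case/orP => [/IH H|/existsP[z /andP[/IH H Hz]]]; first by rewrite addnS ltnW.
by rewrite addnS; apply: leq_trans (Hf _ _ Hz) _.
Qed.

Lemma path_walk x p : path e x p -> walkn e (size p) x (last x p).
Proof.
elim/last_ind: p => [|p z IH] /=; first by rewrite eqxx.
rewrite rcons_path size_rcons last_rcons => /andP[/IH H Hz].
exact: walk_snoc H Hz.
Qed.

Lemma conn_walk x y : connect e x y -> exists2 k, k < #|V| & walkn e k x y.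
Proof.
case/connectP => p Hp ->.
case: (shortenP Hp) => p' Hp' Hu _.
exists (size p'); last exact: path_walk.
by move/card_uniqP: Hu => /= <-; apply: max_card.
Qed.
End W.

Lemma walk_hom (V1 V2 : finType) (e1 : rel V1) (e2 : rel V2) (h : V1 -> V2) :
  (forall x y, e1 x y -> e2 (h x) (h y)) ->
  forall n x y, walkn e1 n x y -> walkn e2 n (h x) (h y).
Proof.
move=> Hh; elim => [|n IH] x y /=; first by move/eqP->.
case/orP => [/IH ->//|/existsP[z /andP[/IH H Hz]]].
by apply/orP; right; apply/existsP; exists (h z); rewrite H Hh.
Qed.

Lemma sum_split (V : finType) (v : V) (F : V -> nat) :
  \sum_(x : V) F x = F v + \sum_(y : {x : V | x != v}) F (val y).
Proof.
rewrite (bigD1 v) //=; congr (_ + _).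
rewrite (reindex_omap (val : {x : V | x != v} -> V) insub); last first.
  by move=> i Pi; rewrite insubT.
apply: eq_bigl=> -[i iA]/=; rewrite iA insubT /=; apply/eqP; congr Some; exact: val_inj.
Qed.
Section M.
Variables (T : finType) (e : rel T) (w : T) (c : nat).
Hypothesis Hc : 3 <= c.
Local Notation V := (gstarV T c).
Local Notation E := (gstar e w c).
Local Notation v1 := (gs_v1 T c).
Local Notation S := {x : V | x != v1}.
Local Notation Es := (vdel E v1).

Lemma cardV : #|V| = #|T| + c + 1.
Proof. rewrite /gstarV !card_sum card_unit !card_ord; lia. Qed.

Lemma cardS : #|{: S}| = #|T| + c.
Proof. rewrite card_sig. have := cardC1 v1. rewrite cardV. 
have -> : #|[pred x | x != v1]| = #|predC1 v1| by []. by rewrite cardC1 cardV addn1. Qed.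

Definition pot (x : V) : nat :=
  match x with inl _ => 0 | inr (inl i) => c - 2 - i | inr (inr j) => c - 1 + j end.

Lemma pot_edge (x y : S) : Es x y -> pot (val y) <= (pot (val x)).+1.
Proof.
case: x y => [[[a|[]]|[i|j]] Hx] [[[b|[]]|[k|l]] Hy] //=;
 rewrite /vdel /gstar /=;
 repeat match goal with [i : 'I_ _ |- _] => generalize (ltn_ord i); generalize (nat_of_ord i); clear i end;
 intros; lia.
Qed.

Local Notation ws := (@gs_w_del T c w).

Lemma LB (y : S) : pot (val y) <= dist Es ws y.
Proof.
apply: dist_ge.
  move=> n Hn; have := walk_pot (f := fun x : S => pot (val x)) pot_edge Hn.
  by rewrite /= add0n.
rewrite cardS; case: y => [[[a|[]]|[i|i]] Hy] /=; try lia; have := ltn_ord i; lia.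
Qed.

Lemma sub_mono (y : S) : dist Es ws y < #|{: S}| ->
  dist E (gs_w c w) (val y) <= dist Es ws y.
Proof.
move=> H; apply: dist_le.
  exact: (walk_hom (h := val) (fun x y H => H) (dist_walk H)).
by rewrite cardV; rewrite cardS in H; lia.
Qed.

Lemma Gpart (Hconn : forall x y, connect e x y) a :
  dist E (gs_w c w) (inl (inl a)) <= dist Es ws (@gs_w_del T c a).
Proof.
have [k Hk Hw] := conn_walk (Hconn w a).
have Hw' : walkn Es k (@gs_w_del T c w) (@gs_w_del T c a) :=
  walk_hom (h := @gs_w_del T c) (fun x y H => H) Hw.
have Hd : dist Es ws (@gs_w_del T c a) <= k by apply: dist_le Hw' _; rewrite cardS; lia.
apply: (sub_mono (y := @gs_w_del T c a)); rewrite cardS; lia.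
Qed.

Lemma v1_le : dist E (gs_w c w) v1 <= 1.
Proof.
apply: dist_le; last by rewrite cardV; lia.
by apply: (walk_snoc (z := gs_w c w)); rewrite /= ?eqxx.
Qed.
End M.

Lemma sum_one (I : finType) (P : pred I) (f g : I -> nat) j k m :
  P j -> f j + k <= g j ->
  \sum_(i | P i && (i != j)) f i + m <= \sum_(i | P i && (i != j)) g i ->
  \sum_(i | P i) f i + (k + m) <= \sum_(i | P i) g i.
Proof.
move=> Pj h1 h2.
rewrite (bigD1 j Pj) /= [X in _ <= X](bigD1 j Pj) /=; lia.
Qed.

Lemma sum3 (I : finType) (f g : I -> nat) i1 i2 i3 :
  i1 != i2 -> i1 != i3 -> i2 != i3 -> (forall i, f i <= g i) ->
  f i1 < g i1 -> f i2 < g i2 -> f i3 < g i3 -> \sum_i f i + 3 <= \sum_i g i.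
Proof.
move=> n12 n13 n23 H h1 h2 h3.
apply: (sum_one (j := i1) (k := 1) (m := 2)); [by [] | by rewrite addn1 | ].
apply: (sum_one (j := i2) (k := 1) (m := 1)); [by rewrite /= eq_sym n12 | by rewrite addn1 | ].
apply: (sum_one (j := i3) (k := 1) (m := 0)); [by rewrite /= !(eq_sym i3) n13 n23 | by rewrite addn1 | rewrite addn0].
by apply: leq_sum => i _; apply: H.
Qed.


Ltac st z := apply: (walk_snoc (z := z)); last by rewrite /gstar /= ?eqxx.
Ltac fin0 := exact: eqxx.

Section C5.
Variables (T : finType) (e : rel T) (w : T).
Hypothesis Hconn : forall x y, connect e x y.
Local Notation V := (gstarV T 5).
Local Notation E := (gstar e w 5).
Local Notation v1 := (gs_v1 T 5).
Local Notation S := {x : V | x != v1}.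
Local Notation Es := (vdel E v1).
Local Notation ws := (@gs_w_del T 5 w).
Local Notation "'UU' k" := (inr (inl (@Ordinal 3 k isT)) : V) (at level 0, k at level 0).
Local Notation "'PP' k" := (inr (inr (@Ordinal 2 k isT)) : V) (at level 0, k at level 0).
Local Notation "'VV1'" := (gs_v1 T 5) (at level 0).
Let Hc : 2 < 5. Proof. by []. Qed.

Lemma all5 (y : S) : dist E (gs_w 5 w) (val y) <= dist Es ws y.
Proof.
case: y => [[[a|[]]|[i|j]] Hy].
- rewrite (eq_irrelevance Hy (@gs_w_neq_v1 T 5 a)); exact: Gpart.
- by exfalso; exact: (negP Hy (eqxx _)).
- apply: (leq_trans _ (LB e w Hc _)) => /=.
  case: i Hy => [[|[|[|k]]] Hi] Hy //=.
  + apply: (@leq_trans 2); last by []. apply: dist_le; last by rewrite cardV //; lia.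
    st VV1. st (gs_w 5 w). fin0.
  + apply: (@leq_trans 2); last by []. apply: dist_le; last by rewrite cardV //; lia.
    st (UU 2). st (gs_w 5 w). fin0.
  + apply: (@leq_trans 1); last by []. apply: dist_le; last by rewrite cardV //; lia.
    st (gs_w 5 w). fin0.
- apply: (leq_trans _ (LB e w Hc _)) => /=.
  case: j Hy => [[|[|k]] Hi] Hy //=.
  + apply: (@leq_trans 3); last by []. apply: dist_le; last by rewrite cardV //; lia.
    st (UU 0). st VV1. st (gs_w 5 w). fin0.
  + apply: (@leq_trans 4); last by []. apply: dist_le; last by rewrite cardV //; lia.
    st (PP 0). st (UU 0). st VV1. st (gs_w 5 w). fin0.
Qed.

Lemma key5 : \sum_(y : S) dist E (gs_w 5 w) (val y) + 3 <= \sum_(y : S) dist Es ws y.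
Proof.
apply: (sum3 (i1 := (exist _ (UU 0) isT : S)) (i2 := (exist _ (PP 0) isT : S))
  (i3 := (exist _ (PP 1) isT : S))) => //.
- exact: all5.
- apply: (leq_trans _ (LB e w Hc _)) => /=.
  apply: (@leq_ltn_trans 2); last by []. apply: dist_le; last by rewrite cardV //; lia.
  st VV1. st (gs_w 5 w). fin0.
- apply: (leq_trans _ (LB e w Hc _)) => /=.
  apply: (@leq_ltn_trans 3); last by []. apply: dist_le; last by rewrite cardV //; lia.
  st (UU 0). st VV1. st (gs_w 5 w). fin0.
- apply: (leq_trans _ (LB e w Hc _)) => /=.
  apply: (@leq_ltn_trans 4); last by []. apply: dist_le; last by rewrite cardV //; lia.
  st (PP 0). st (UU 0). st VV1. st (gs_w 5 w). fin0.
Qed.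
End C5.

Section C6.
Variables (T : finType) (e : rel T) (w : T).
Hypothesis Hconn : forall x y, connect e x y.
Local Notation V := (gstarV T 6).
Local Notation E := (gstar e w 6).
Local Notation v1 := (gs_v1 T 6).
Local Notation S := {x : V | x != v1}.
Local Notation Es := (vdel E v1).
Local Notation ws := (@gs_w_del T 6 w).
Local Notation "'UU' k" := (inr (inl (@Ordinal 4 k isT)) : V) (at level 0, k at level 0).
Local Notation "'PP' k" := (inr (inr (@Ordinal 2 k isT)) : V) (at level 0, k at level 0).
Local Notation "'VV1'" := (gs_v1 T 6) (at level 0).
Let Hc : 2 < 6. Proof. by []. Qed.

Lemma all6 (y : S) : dist E (gs_w 6 w) (val y) <= dist Es ws y.
Proof.
case: y => [[[a|[]]|[i|j]] Hy].
- rewrite (eq_irrelevance Hy (@gs_w_neq_v1 T 6 a)); exact: Gpart.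
- by exfalso; exact: (negP Hy (eqxx _)).
- apply: (leq_trans _ (LB e w Hc _)) => /=.
  case: i Hy => [[|[|[|[|k]]]] Hi] Hy //=.
  + apply: (@leq_trans 2); last by []. apply: dist_le; last by rewrite cardV //; lia.
    st VV1. st (gs_w 6 w). fin0.
  + apply: (@leq_trans 3); last by []. apply: dist_le; last by rewrite cardV //; lia.
    st (UU 0). st VV1. st (gs_w 6 w). fin0.
  + apply: (@leq_trans 2); last by []. apply: dist_le; last by rewrite cardV //; lia.
    st (UU 3). st (gs_w 6 w). fin0.
  + apply: (@leq_trans 1); last by []. apply: dist_le; last by rewrite cardV //; lia.
    st (gs_w 6 w). fin0.
- apply: (leq_trans _ (LB e w Hc _)) => /=.
  case: j Hy => [[|[|k]] Hi] Hy //=.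
  + apply: (@leq_trans 3); last by []. apply: dist_le; last by rewrite cardV //; lia.
    st (UU 0). st VV1. st (gs_w 6 w). fin0.
  + apply: (@leq_trans 4); last by []. apply: dist_le; last by rewrite cardV //; lia.
    st (PP 0). st (UU 0). st VV1. st (gs_w 6 w). fin0.
Qed.

Lemma key6 : \sum_(y : S) dist E (gs_w 6 w) (val y) + 3 <= \sum_(y : S) dist Es ws y.
Proof.
apply: (sum3 (i1 := (exist _ (UU 0) isT : S)) (i2 := (exist _ (PP 0) isT : S))
  (i3 := (exist _ (PP 1) isT : S))) => //.
- exact: all6.
- apply: (leq_trans _ (LB e w Hc _)) => /=.
  apply: (@leq_ltn_trans 2); last by []. apply: dist_le; last by rewrite cardV //; lia.
  st VV1. st (gs_w 6 w). fin0.
- apply: (leq_trans _ (LB e w Hc _)) => /=.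
  apply: (@leq_ltn_trans 3); last by []. apply: dist_le; last by rewrite cardV //; lia.
  st (UU 0). st VV1. st (gs_w 6 w). fin0.
- apply: (leq_trans _ (LB e w Hc _)) => /=.
  apply: (@leq_ltn_trans 4); last by []. apply: dist_le; last by rewrite cardV //; lia.
  st (PP 0). st (UU 0). st VV1. st (gs_w 6 w). fin0.
Qed.
End C6.

Local Open Scope ring_scope.

Theorem lemma3 (T : finType) (e : rel T) (w : T) (c : nat) :
  symmetric e -> irreflexive e -> (forall x y : T, connect e x y) ->
  (c = 5%N \/ c = 6%N) ->
  delta_gstar e w c <= -2.
Proof.
move=> Hsym Hirr Hconn Hc.
rewrite /delta_gstar.
suff H : (transmission (gstar e w c) (gs_w c w) + 2 <=
          transmission (vdel (gstar e w c) (gs_v1 T c)) (@gs_w_del T c w))%N.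
  lia.
case: Hc => ?; subst c; rewrite /transmission (sum_split (gs_v1 T _)).
- have := @key5 T e w Hconn; have := @v1_le T e w 5 isT.
  move=> h1 h2; apply: (leq_trans _ h2); rewrite addnAC addnC leq_add2l; lia.
- have := @key6 T e w Hconn; have := @v1_le T e w 6 isT.
  move=> h1 h2; apply: (leq_trans _ h2); rewrite addnAC addnC leq_add2l; lia.
Qed.
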